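(* For $t\ge t_0$ let $\mathcal S^t:=\{f\in\Omega:\forall s\in(0,t): f(-s)-f(-t)>b+c_2t-c_1s\}$. Then, with closures taken in $\Omega$, $$\overline{\mathcal S^t}=\{f\in\Omega:\ \forall s\in(0,t):\ f(-s)-f(-t)\ge b+c_2t-c_1s\},\qquad \overline{\mathcal S}=\bigcup_{t\ge t_0}\overline{\mathcal S^t}.$$
   Context: $\Omega$ is the set of continuous $\omega:\mathbb R\to\mathbb R$ with $\omega(0)=0$ and $\omega(t)/(1+|t|)\to0$ as $t\to\pm\infty$, with norm $\|\omega\|_\Omega:=\sup_{t\in\mathbb R}|\omega(t)|/(1+|t|)$. Fix $b>0$, $c_1>c_2>0$, $t_0:=b/(c_1-c_2)$, and $$\mathcal S:=\{f\in\Omega:\ \exists t>t_0\ \forall s\in(0,t):\ f(-s)-f(-t)>b+c_2t-c_1s\}=\bigcup_{t>t_0}\mathcal S^t.$$ *)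

(* Defs.v *)
From HB Require Import structures.
From mathcomp Require Import all_boot all_order all_algebra.
From mathcomp Require Import all_classical all_reals all_analysis.
Set Implicit Arguments. Unset Strict Implicit. Unset Printing Implicit Defensive.
Import Order.TTheory GRing.Theory Num.Theory.
Import numFieldNormedType.Exports.
Local Open Scope classical_set_scope.
Local Open Scope ring_scope.

Section OmegaDefs.
Variable R : realType.

Definition Omega : set (R -> R) :=
  [set f : R -> R | continuous f /\ f 0 = 0 /\
     (fun t : R => f t / (1 + `|t|)) @ +oo --> (0 : R) /\
     (fun t : R => f t / (1 + `|t|)) @ -oo --> (0 : R)].

Definition normOmega (f : R -> R) : R :=
  sup [set `|f t| / (1 + `|t|) | t in [set: R]].

Definition closureOmega (A : set (R -> R)) : set (R -> R) :=
  [set f | Omega f /\ forall e : R, 0 < e ->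
     exists g, A g /\ normOmega (f \- g) < e].

Definition t0 (b c1 c2 : R) : R := b / (c1 - c2).

Definition St (b c1 c2 t : R) : set (R -> R) :=
  [set f | Omega f /\ forall s, 0 < s < t -> f (- s) - f (- t) > b + c2 * t - c1 * s].

Definition StClosed (b c1 c2 t : R) : set (R -> R) :=
  [set f | Omega f /\ forall s, 0 < s < t -> f (- s) - f (- t) >= b + c2 * t - c1 * s].

Definition S (b c1 c2 : R) : set (R -> R) :=
  \bigcup_(t in [set t | t0 b c1 c2 < t]) St b c1 c2 t.

End OmegaDefs.

(* Main.v *)
Require Import Defs.
From HB Require Import structures.
From mathcomp Require Import all_boot all_order all_algebra.
From mathcomp Require Import all_classical all_reals all_analysis.
Import Order.TTheory GRing.Theory Num.Theory.
Import numFieldNormedType.Exports.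
From mathcomp Require Import lra.
Local Open Scope classical_set_scope.
Local Open Scope ring_scope.

Set Implicit Arguments. Unset Strict Implicit.
Section H.
Variable R : realType.
Implicit Types (f g h k : R -> R) (t x y e B : R).

Lemma cont_at f x e : continuous f -> 0 < e ->
  exists2 d, 0 < d & forall y, `|x - y| < d -> `|f x - f y| < e.
Proof.
move=> cf e0.
have := cf x; move/cvgrPdist_lt => /(_ e e0) /nbhs_ballP [d d0 H].
exists d => // y xy; apply: H; rewrite /ball /= ; done.
Qed.

Lemma ninf_lt f e : Omega f -> 0 < e ->
  exists M, forall x, x < M -> `|f x / (1 + `|x|)| < e.
Proof.
move=> [_ [_ [_ H]]] e0.
move/cvgrPdist_lt: H => /(_ e e0) [M [_ HM]].
by exists M => x /HM; rewrite sub0r normrN.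
Qed.

Lemma pinf_lt f e : Omega f -> 0 < e ->
  exists M, forall x, M < x -> `|f x / (1 + `|x|)| < e.
Proof.
move=> [_ [_ [H _]]] e0.
move/cvgrPdist_lt: H => /(_ e e0) [M [_ HM]].
by exists M => x /HM; rewrite sub0r normrN.
Qed.

Lemma ratio_norm h t : `|h t / (1 + `|t|)| = `|h t| / (1 + `|t|).
Proof.
have p : 0 < 1 + `|t| by rewrite ltr_wpDr.
by rewrite normrM normfV (gtr0_norm p).
Qed.

Lemma ratio_le h t : `|h t| / (1 + `|t|) <= `|h t|.
Proof.
have p : 0 < 1 + `|t| by rewrite ltr_wpDr.
by rewrite ler_pdivrMr // ler_peMr // lerDl.
Qed.

Lemma omega_ub h : Omega h -> exists B, forall t, `|h t| / (1 + `|t|) <= B.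
Proof.
move=> Oh; have [ch _] := Oh.
have [M1 H1] := ninf_lt Oh ltr01.
have [M2 H2] := pinf_lt Oh ltr01.
have ab : M1 <= Num.max M1 M2 by rewrite le_max lexx.
have cn : {within `[M1, Num.max M1 M2], continuous (fun x => `|h x|)}.
  apply: continuous_subspaceT => x.
  exact: (continuous_comp (ch x) (@norm_continuous _ R^o _)).
have [c _ Hc] := EVT_max ab cn.
exists (Num.max 1 `|h c|) => t.
have [tM1|] := ltP t M1.
  by rewrite -ratio_norm; apply: le_trans (ltW (H1 _ tM1)) _; rewrite le_max lexx.
have [tM2 _|tM2 M1t] := ltP M2 t.
  by rewrite -ratio_norm; apply: le_trans (ltW (H2 _ tM2)) _; rewrite le_max lexx.
apply: le_trans (ratio_le h t) _.
apply: le_trans (Hc t _) _; last by rewrite le_max lexx orbT.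
by rewrite in_itv /= M1t le_max tM2 orbT.
Qed.

Lemma omegaD f g : Omega f -> Omega g -> Omega (f \+ g).
Proof.
move=> [cf [f0 [fp fn]]] [cg [g0 [gp gn]]]; split.
  by move=> x; exact: (continuousD (cf x) (cg x)).
split; first by rewrite /= f0 g0 addr0.
have E : (fun t => (f \+ g) t / (1 + `|t|)) =
   (fun t => f t / (1 + `|t|)) + (fun t => g t / (1 + `|t|)).
  by apply: funext => t /=; rewrite mulrDl.
rewrite E; split; rewrite -[0 : R](addr0 0); exact: cvgD.
Qed.

Lemma omegaN f : Omega f -> Omega (fun x => - f x).
Proof.
move=> [cf [f0 [fp fn]]]; split.
  by move=> x; exact: (continuousN (cf x)).
split; first by rewrite f0 oppr0.
have E : (fun t => - f t / (1 + `|t|)) = - (fun t => f t / (1 + `|t|)).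
  by apply: funext => t /=; rewrite mulNr.
rewrite E; split; rewrite -oppr0; exact: cvgN.
Qed.

Lemma omegaB f g : Omega f -> Omega g -> Omega (f \- g).
Proof. move=> Of Og; have H := omegaD Of (omegaN Og); exact: H. Qed.

Lemma norm_pt h t : Omega h -> `|h t| / (1 + `|t|) <= normOmega h.
Proof.
move=> /omega_ub [B HB]; apply: ub_le_sup; last by exists t.
by exists B => _ [u _ <-]; apply: HB.
Qed.

Lemma norm_le h B : (forall t, `|h t| / (1 + `|t|) <= B) -> normOmega h <= B.
Proof.
move=> HB; apply: ge_sup; first by exists (`|h 0| / (1 + `|0 : R|)), 0.
by move=> _ [u _ <-]; apply: HB.
Qed.

Lemma norm_ptw f g e t : Omega f -> Omega g -> normOmega (f \- g) < e ->
  `|f t - g t| <= e * (1 + `|t|).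
Proof.
move=> Of Og He.
have p : 0 < 1 + `|t| by rewrite ltr_wpDr.
rewrite -ler_pdivrMr //; apply: le_trans (ltW He).
exact: (norm_pt t (omegaB Of Og)).
Qed.
Lemma cont_maxc (a : R) : continuous (fun x : R => Num.max x a).
Proof. move=> x. apply: (@continuous_max R R id (fun=> a) x cvg_id); exact: cst_continuous. Qed.
Lemma cont_minc (a : R) : continuous (fun x : R => Num.min x a).
Proof. move=> x. apply: (@continuous_min R R id (fun=> a) x cvg_id); exact: cst_continuous. Qed.
Lemma cont_comp (f g : R -> R) : continuous f -> continuous g -> continuous (fun x => f (g x)).
Proof. move=> cf cg x. exact: (continuous_comp (cg x) (cf (g x))). Qed.
Lemma const_ratio (eps C t : R) : 0 < eps -> `|C| / eps < `|t| -> `|C / (1 + `|t|)| < eps.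
Proof.
move=> e0 h.
have p : 0 < 1 + `|t| by rewrite ltr_wpDr.
rewrite normrM normfV (gtr0_norm p) ltr_pdivrMr // .
rewrite ltr_pdivrMr // in h. rewrite mulrDr mulr1 mulrC. lra.
Qed.

Lemma omega_pert k : continuous k -> k 0 = 0 ->
  (exists M C, forall x, M < x -> k x = C) ->
  (exists M C, forall x, x < M -> k x = C) -> Omega k.
Proof.
move=> ck k0 [M1 [C1 H1]] [M2 [C2 H2]]; split => //; split => //; split.
  apply/cvgrPdist_lt => e e0.
  exists (Num.max M1 (`|C1| / e)); split; first by rewrite num_real.
  move=> x; rewrite gt_max => /andP [m1 m2].
  rewrite sub0r normrN H1 //; apply: const_ratio => //.
  by apply: lt_le_trans m2 _; apply: ler_norm.
apply/cvgrPdist_lt => e e0.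
exists (Num.min M2 (- (`|C2| / e))); split; first by rewrite num_real.
move=> x; rewrite lt_min => /andP [m1 m2].
rewrite sub0r normrN H2 //; apply: const_ratio => //.
rewrite ltrNr in m2; apply: lt_le_trans m2 _.
by rewrite -normrN ler_norm.
Qed.

Lemma contD2 f g : continuous f -> continuous g -> continuous (fun x => f x + g x).
Proof. move=> cf cg x; have := continuousD (cf x) (cg x); exact. Qed.
Lemma contB2 f g : continuous f -> continuous g -> continuous (fun x => f x - g x).
Proof. move=> cf cg x; have := continuousB (cf x) (cg x); exact. Qed.

Lemma cont_scale (a : R) : continuous (fun x : R => a * x).
Proof. move=> x; apply: (@continuousM R R (fun=> a) id x); [exact: cst_continuous | exact: cvg_id]. Qed.
End H.

Lemma lin1 (R : realType) (b u v w z : R) : 0 < b -> b + z - w < u - v -> u < 1 -> w <= 1 -> z - 2 < - v.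
Proof. move=> hb H1 h1 c1; lra. Qed.

Section P.
Variables (R : realType) (b c1 c2 : R).
Hypotheses (hb : 0 < b) (hc2 : 0 < c2) (hc : c2 < c1).

Lemma t0_gt0 : 0 < t0 b c1 c2.
Proof. by rewrite /t0 divr_gt0 // subr_gt0. Qed.

Lemma t0_le t : t0 b c1 c2 <= t -> b <= (c1 - c2) * t.
Proof. by rewrite /t0 ler_pdivrMr ?subr_gt0 // mulrC. Qed.

Lemma closure_sub t : closureOmega (St b c1 c2 t) `<=` StClosed b c1 c2 t.
Proof.
move=> f [Of Hf]; split => // s /andP [s0 st].
have tp : 0 < t by apply: lt_trans st.
apply/ler_addgt0Pr => eps e0.
set L := 2 + s + t.
have L0 : 0 < L by rewrite /L; lra.
have [g [[Og Hg] Hn]] := Hf (eps / L) (divr_gt0 e0 L0).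
have h1 := norm_ptw (- s) Of Og Hn.
have h2 := norm_ptw (- t) Of Og Hn.
have := Hg s; rewrite s0 st => /(_ isT) H.
rewrite !normrN (gtr0_norm s0) (gtr0_norm tp) in h1 h2.
have E : eps / L * (1 + s) + eps / L * (1 + t) = eps.
  rewrite -mulrDr (_ : (1 + s) + (1 + t) = L); last by rewrite /L; lra.
  by rewrite divfK // gt_eqF.
move: h1 h2; rewrite !ler_norml => /andP [h1 h1'] /andP [h2 h2'].
lra.
Qed.

Lemma stclosed_sub t : t0 b c1 c2 <= t -> StClosed b c1 c2 t `<=` closureOmega (St b c1 c2 t).
Proof.
move=> tt f [Of Hf]; split => // e e0.
have tp : 0 < t := lt_le_trans t0_gt0 tt.
set d := e / (2 * t).
have d0 : 0 < d by rewrite /d divr_gt0 // mulr_gt0.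
set k := fun x => d * Num.min (Num.max x (- t)) t.
have Ok : Omega k.
  apply: omega_pert.
  - rewrite /k; apply: (cont_comp (f:=fun y => d * y) (g := fun x => Num.min (Num.max x (- t)) t)); first exact: cont_scale.
    apply: (cont_comp (f:=fun y => Num.min y t) (g := fun x => Num.max x (- t))); [exact: cont_minc | exact: cont_maxc].
  - rewrite /k (max_idPl _); last by rewrite oppr_le0 ltW.
    by rewrite (min_idPl _) ?mulr0 // ltW.
  - exists t, (d * t) => x xt; rewrite /k (max_idPl _); last first.
      by apply: le_trans (ltW xt); rewrite -subr_ge0 opprK; lra.
    by rewrite (min_idPr _) // ltW.
  - exists (- t), (d * - t) => x xt; rewrite /k (max_idPr _); last exact: ltW.
    by rewrite (min_idPl _) //; lra.
have Og : Omega (f \+ k) by have := omegaD Of Ok.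
exists (f \+ k); split; first split => //.
  move=> s /andP [s0 st]; rewrite /= /k.
  rewrite (max_idPl (_ : - t <= - s)); last by rewrite lerN2 ltW.
  rewrite (min_idPl (_ : - s <= t)); last by lra.
  rewrite (max_idPl (lexx (- t))) (min_idPl (_ : - t <= t)); last by lra.
  have := Hf s; rewrite s0 st => /(_ isT) H.
  have P : 0 < d * (t - s) by rewrite mulr_gt0 // subr_gt0.
  have Q : d * - s - d * - t = d * (t - s) by rewrite mulrN mulrN opprK mulrBr addrC.
  lra.
apply: le_lt_trans (norm_le (B := e / 2) _) _; last by lra.
move=> x /=.
rewrite (_ : f x - (f x + k x) = - k x); last by rewrite opprD addrA subrr sub0r.
rewrite normrN; apply: le_trans (ratio_le _ _) _.
rewrite /k normrM (gtr0_norm d0).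
have -> : e / 2 = d * t by rewrite /d invfM mulrA mulrAC mulfK // gt_eqF.
rewrite ler_pM2l // ler_norml; apply/andP; split.
  by rewrite le_min le_max lexx orbT /=; lra.
by rewrite ge_min lexx orbT.
Qed.

Lemma stclosed_S t : t0 b c1 c2 <= t -> StClosed b c1 c2 t `<=` closureOmega (S b c1 c2).
Proof.
move=> tt f [Of Hf]; split => // e e0.
have tp : 0 < t := lt_le_trans t0_gt0 tt.
have btt := t0_le tt.
have cf : continuous f by case: Of.
have e4 : 0 < e / 4 by lra.
have [de de0 Hde] := cont_at (- t) cf e4.
set K := 2 * c2.
have K0 : 0 < K by rewrite /K mulr_gt0 // ltr0n.
set d := Num.min (de / 2) (e / (8 * c2)).
have d0 : 0 < d by rewrite lt_min; apply/andP; split; [lra | rewrite divr_gt0 // mulr_gt0].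
have d1 : d <= de / 2 by rewrite /d ge_min lexx.
have dde : d < de by lra.
have dK : K * d <= e / 4.
  have : d <= e / (8 * c2) by rewrite /d ge_min lexx orbT.
  rewrite ler_pdivlMr ?mulr_gt0 // /K => h; lra.
set t' := t + d.
set k := fun x => f (Num.max x (- t)) - f x + f (Num.min x (- t')) - f (- t')
   - K * Num.min (Num.max (- t - x) 0) d.
have kE1 : forall x, - t <= x -> k x = 0.
  move=> x xt; rewrite /k (max_idPl xt) (min_idPr (_ : - t' <= x)); last by rewrite /t'; lra.
  rewrite (max_idPr (_ : - t - x <= 0)); last by lra.
  by rewrite (min_idPl (ltW d0)) mulr0; lra.
have kE2 : forall x, - t' <= x <= - t -> k x = f (- t) - f x - K * (- t - x).
  move=> x /andP [x1 x2]; rewrite /k (max_idPr x2) (min_idPr x1).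
  rewrite (max_idPl (_ : 0 <= - t - x)); last by lra.
  by rewrite (min_idPl (_ : - t - x <= d)); [lra | rewrite /t' in x1; lra].
have kE3 : forall x, x <= - t' -> k x = f (- t) - f (- t') - K * d.
  move=> x x1; rewrite /k (max_idPr (_ : x <= - t)); last by rewrite /t' in x1; lra.
  rewrite (min_idPl x1) (max_idPl (_ : 0 <= - t - x)); last by rewrite /t' in x1; lra.
  by rewrite (min_idPr (_ : d <= - t - x)); [lra | rewrite /t' in x1; lra].
have Ok : Omega k.
  apply: omega_pert.
  - rewrite /k; apply: contB2; last first.
      apply: (cont_comp (f:=fun y => K * y) (g := fun x => Num.min (Num.max (- t - x) 0) d)); first exact: cont_scale.
      apply: (cont_comp (f:=fun y => Num.min y d) (g := fun x => Num.max (- t - x) 0)); first exact: cont_minc.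
      apply: (cont_comp (f:=fun y => Num.max y 0) (g := fun x => - t - x)); first exact: cont_maxc.
      by apply: contB2 => x; [exact: cst_continuous | exact: cvg_id].
    apply: contB2; last by move=> x; exact: cst_continuous.
    apply: contD2; last first.
      by apply: (cont_comp (f:=f) (g := fun x => Num.min x (- t'))) => //; exact: cont_minc.
    apply: contB2 => //.
    by apply: (cont_comp (f:=f) (g := fun x => Num.max x (- t))) => //; exact: cont_maxc.
  - by apply: kE1; lra.
  - by exists 0, 0 => x x0; apply: kE1; lra.
  - by exists (- t'), (f (- t) - f (- t') - K * d) => x x0; apply: kE3; apply: ltW.
have Og : Omega (f \+ k) by have := omegaD Of Ok.
have kt' : k (- t') = f (- t) - f (- t') - K * d by apply: kE3.
exists (f \+ k); split.
  exists t'; first by rewrite /= /t'; lra.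
  split => // s /andP [s0 st]; rewrite /= kt'.
  have ct : c2 * t' = c2 * t + c2 * d by rewrite /t' mulrDr.
  have cd : 0 < c2 * d by rewrite mulr_gt0.
  have [sle|slt] := leP s t.
    rewrite kE1; last by rewrite lerN2.
    have [slt|seq] := ltP s t.
      have := Hf s; rewrite s0 slt => /(_ isT) H.
      rewrite /K; lra.
    have -> : s = t by apply/eqP; rewrite eq_le sle seq.
    rewrite /K; lra.
  rewrite kE2; last by rewrite /t' in st *; apply/andP; split; lra.
  have P1 : 0 < (c1 - c2) * (s - t) by rewrite mulr_gt0 // subr_gt0.
  have P2 : 0 < c2 * (t' - s) by rewrite mulr_gt0 // subr_gt0.
  rewrite /K /t' in ct P2 *; lra.
apply: le_lt_trans (norm_le (B := e / 2) _) _; last by lra.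
move=> x /=.
rewrite (_ : f x - (f x + k x) = - k x); last by rewrite opprD addrA subrr sub0r.
rewrite normrN; apply: le_trans (ratio_le _ _) _.
have [xt|xt] := leP (- t) x; first by rewrite kE1 // normr0; lra.
have [xt'|xt'] := leP (- t') x.
  rewrite kE2; last by apply/andP; split => //; apply: ltW.
  have h1 : `|f (- t) - f x| < e / 4 by apply: Hde; rewrite ger0_norm; [rewrite /t' in xt'; lra | lra].
  have h2 : 0 <= K * (- t - x) by apply: mulr_ge0 (ltW K0) _; rewrite subr_ge0 ltW.
  have h3 : K * (- t - x) <= K * d by apply: (ler_wpM2l (ltW K0)); rewrite /t' in xt'; lra.
  move: h1; rewrite ltr_norml => /andP [h1 h1'].
  rewrite ler_norml; apply/andP; split; lra.
rewrite kE3; last exact: ltW.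
have h1 : `|f (- t) - f (- t')| < e / 4 by apply: Hde; rewrite /t' ger0_norm; lra.
have h2 : 0 <= K * d by apply: mulr_ge0 (ltW K0) (ltW d0).
move: h1; rewrite ltr_norml => /andP [h1 h1'].
rewrite ler_norml; apply/andP; split; lra.
Qed.

Lemma St_neg (g : R -> R) (t' : R) : Omega g -> 0 < t' ->
  (forall s : R, 0 < s < t' -> b + c2 * t' - c1 * s < g (- s) - g (- t')) ->
  c2 * t' - 2 < - g (- t').
Proof.
move=> Og tp Hg.
have cg : continuous g by case: Og.
have g0 : g 0 = 0 by case: Og => _ [].
have c1p : 0 < c1 by apply: lt_trans hc.
have [de de0 Hde] := cont_at 0 cg ltr01.
set s := Num.min (de / 2) (Num.min (c1^-1) (t' / 2)).
have s1 : s <= de / 2 by rewrite /s ge_min lexx.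
have s2 : s <= c1^-1 by rewrite /s !ge_min lexx orbT.
have s3 : s <= t' / 2 by rewrite /s !ge_min lexx !orbT.
have s0 : 0 < s.
  rewrite /s !lt_min; apply/andP; split; first by lra.
  by apply/andP; split; [rewrite invr_gt0 | lra].
have c1s : c1 * s <= 1.
  by have := ler_wpM2l (ltW c1p) s2; rewrite mulfV ?gt_eqF.
have H : b + c2 * t' - c1 * s < g (- s) - g (- t').
  by apply: Hg; apply/andP; split => //; lra.
have : `|g 0 - g (- s)| < 1 by apply: Hde; rewrite sub0r opprK gtr0_norm //; lra.
rewrite g0 sub0r normrN ltr_norml => /andP [_ h].
exact: (lin1 hb H h c1s).
Qed.

Lemma t_bound (f : R -> R) : Omega f -> exists M : R, forall (t' : R) (g : R -> R), 0 < t' -> Omega g ->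
  (forall s : R, 0 < s < t' -> b + c2 * t' - c1 * s < g (- s) - g (- t')) ->
  normOmega (f \- g) < c2 / 4 -> t' <= M.
Proof.
move=> Of.
have hc2' : (0 : R) < c2 by exact: hc2.
have c4 : 0 < c2 / 4 by lra.
have [T HT] := ninf_lt Of c4.
exists (Num.max (- T) (4 / c2 + 1)) => t' g tp Og Hg Hn.
have [tT|tT] := leP t' (- T); first by rewrite le_max tT.
have h1 := HT (- t'); rewrite ratio_norm normrN (gtr0_norm tp) in h1.
have h1' : `|f (- t')| < c2 / 4 * (1 + t').
  by rewrite -ltr_pdivrMr ?ltr_wpDr // ?ltW //; apply: h1; lra.
have h2 := norm_ptw (- t') Of Og Hn; rewrite normrN (gtr0_norm tp) in h2.
have h3 := St_neg Og tp Hg.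
move: h1' h2; rewrite ltr_norml ler_norml => /andP [h1a h1b] /andP [h2a h2b].
have h4 : (t' - 1) * c2 < 4 by lra.
rewrite le_max; apply/orP; right.
have : t' - 1 < 4 / c2 by rewrite ltr_pdivlMr.
lra.
Qed.

Lemma S_closure_sub (f : R -> R) : closureOmega (S b c1 c2) f ->
  exists2 ts : R, t0 b c1 c2 <= ts & StClosed b c1 c2 ts f.
Proof.
move=> [Of Hf].
have hc2' : (0 : R) < c2 by exact: hc2.
have hb' : (0 : R) < b by exact: hb.
have t0p := t0_gt0.
have [M HM] := t_bound Of.
set B := (fun t : R => forall e : R, 0 < e -> exists (t' : R) (g : R -> R), t <= t' /\ t0 b c1 c2 < t' /\ St b c1 c2 t' g /\ normOmega (f \- g) < e) : set R.
have Bt0 : B (t0 b c1 c2).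
  move=> e e0; have [g [[t' tt' Sg] Hn]] := Hf e e0.
  by exists t', g; split; [exact: ltW | split].
have Bub : ubound B M.
  move=> t Bt; have [t' [g [tt' [t0t' [[Og Hg] Hn]]]]] := Bt (c2 / 4) ltac:(lra).
  apply: le_trans tt' _; apply: (HM t' g) => //; first exact: lt_trans t0t'.
have hsup : has_sup B by split; [exists (t0 b c1 c2) | exists M].
set ts := sup B.
have t0ts : t0 b c1 c2 <= ts by apply: sup_upper_bound.
have tsp : 0 < ts by apply: lt_le_trans t0ts.
have key : forall de e : R, 0 < de -> 0 < e -> exists (t' : R) (g : R -> R),
    `|t' - ts| < de /\ St b c1 c2 t' g /\ normOmega (f \- g) < e.
  move=> de e de0 e0.
  have [t1 Bt1 lt1] := sup_adherent de0 hsup.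
  have nB : ~ B (ts + de / 2).
    move=> Bx; have := sup_upper_bound hsup Bx; rewrite -/ts; lra.
  have [e1 [e10 He1]] : exists e1 : R, 0 < e1 /\ forall (t' : R) (g : R -> R),
      ts + de / 2 <= t' -> St b c1 c2 t' g -> ~ normOmega (f \- g) < e1.
    apply: contrapT => H; apply: nB => e2 e20; apply: contrapT => H2; apply: H.
    exists e2; split => // t' g h1 h2 h3; apply: H2; exists t', g; split => //.
    split => //.
    by apply: lt_le_trans h1; rewrite -subr_gt0 in t0ts *; lra.
  have emin : 0 < Num.min e e1 by rewrite lt_min e0 e10.
  have [t' [g [t1t' [_ [Sg Hn]]]]] := Bt1 _ emin.
  have Hn1 : normOmega (f \- g) < e by apply: lt_le_trans Hn _; rewrite ge_min lexx.
  have Hn2 : normOmega (f \- g) < e1 by apply: lt_le_trans Hn _; rewrite ge_min lexx orbT.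
  exists t', g; split => //.
  have [tl|tl] := leP (ts + de / 2) t'; first by exfalso; exact: (He1 t' g tl Sg Hn2).
  rewrite -/ts in lt1; rewrite ltr_norml; apply/andP; split; lra.
exists ts => //; split => // s /andP [s0 st].
apply/ler_addgt0Pr => eps e0.
have cf : continuous f by case: Of.
have e4 : 0 < eps / 4 by lra.
have [d1 d10 Hd1] := cont_at (- ts) cf e4.
have c4 : 0 < eps / (4 * c2) by rewrite divr_gt0 // mulr_gt0.
set de := Num.min d1 (Num.min (ts - s) (eps / (4 * c2))).
have de1 : de <= d1 by rewrite /de ge_min lexx.
have de2 : de <= ts - s by rewrite /de !ge_min lexx orbT.
have de3 : de <= eps / (4 * c2) by rewrite /de !ge_min lexx !orbT.
have de0 : 0 < de.
  by rewrite /de !lt_min d10 c4 subr_gt0 st.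
set L := 2 + s + ts + de.
have L0 : 0 < L by rewrite /L; lra.
set e := eps / 4 / L.
have ee0 : 0 < e by rewrite /e !divr_gt0 //; lra.
have [t' [g [tt' [[Og Hg] Hn]]]] := key de e de0 ee0.
move: (tt'); rewrite ltr_norml => /andP [tt1 tt2].
have t'p : 0 < t' by lra.
have st' : 0 < s < t' by apply/andP; split => //; lra.
have H := Hg s st'.
have h1 := norm_ptw (- s) Of Og Hn.
have h2 := norm_ptw (- t') Of Og Hn.
rewrite !normrN (gtr0_norm s0) (gtr0_norm t'p) in h1 h2.
have h3 : `|f (- ts) - f (- t')| < eps / 4.
  by apply: Hd1; rewrite opprK addrC; apply: lt_le_trans tt' de1.
have h4 : c2 * (ts - t') < eps / 4.
  have : ts - t' < eps / (4 * c2) by lra.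
  rewrite ltr_pdivlMr ?mulr_gt0 // => h; lra.
have h5 : e * (1 + s) + e * (1 + t') <= eps / 4.
  rewrite -mulrDr.
  have -> : eps / 4 = e * L by rewrite /e divfK // gt_eqF.
  by apply: ler_wpM2l; [exact: ltW | rewrite /L; lra].
move: h1 h2 h3; rewrite !ler_norml ltr_norml => /andP [h1 h1'] /andP [h2 h2'] /andP [h3 h3'].
lra.
Qed.

Theorem lemmaA1' :
  (forall t : R, t0 b c1 c2 <= t ->
     closureOmega (St b c1 c2 t) = StClosed b c1 c2 t) /\
  closureOmega (S b c1 c2) =
    \bigcup_(t in [set t : R | t0 b c1 c2 <= t]) closureOmega (St b c1 c2 t).
Proof.
have P1 : forall t : R, t0 b c1 c2 <= t ->
     closureOmega (St b c1 c2 t) = StClosed b c1 c2 t.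
  move=> t tt; apply/seteqP; split; [exact: closure_sub | exact: stclosed_sub].
split => //; apply/seteqP; split.
  move=> f Hf; have [ts tst Hts] := S_closure_sub Hf.
  by exists ts => //; rewrite P1.
move=> f [t tt Hf]; apply: (stclosed_S tt); exact: closure_sub.
Qed.
End P.

Unset Implicit Arguments.

Theorem lemmaA1 (R : realType) (b c1 c2 : R) (hb : 0 < b) (hc2 : 0 < c2) (hc : c2 < c1) :
  (forall t : R, t0 b c1 c2 <= t ->
     closureOmega (St b c1 c2 t) = StClosed b c1 c2 t) /\
  closureOmega (S b c1 c2) =
    \bigcup_(t in [set t : R | t0 b c1 c2 <= t]) closureOmega (St b c1 c2 t).
Proof. exact: (lemmaA1' hb hc2 hc). Qed.
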